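(* Consider the following maps $\mathbf f_c:\mathbb{R}^2\to\mathbb{R}^2$ (with real parameter $c$ where present), together with the integer $n$: fold: $\mathbf f(x_1,x_2)=(x_1,\,x_2^2)$, $n=2$; cusp: $\mathbf f(x_1,x_2)=(x_1,\,x_1x_2+x_2^3)$, $n=3$; swallowtail: $\mathbf f_c(x_1,x_2)=(x_1x_2+cx_1^2+x_1^4,\,x_2)$, $n=4$; elliptic umbilic: $\mathbf f_c(x_1,x_2)=(3x_2^2-3x_1^2-2cx_1,\,6x_1x_2-2cx_2)$, $n=4$; hyperbolic umbilic: $\mathbf f_c(x_1,x_2)=(-3x_1^2-cx_2,\,-3x_2^2-cx_1)$, $n=4$. For each of these, if $\mathbf s\in\mathbb{R}^2$ has exactly $n$ preimages $\mathbf x_1,\dots,\mathbf x_n$ under $\mathbf f_c$ and $\det[\mathrm{Jac}\,\mathbf f_c](\mathbf x_i)\neq0$ for each $i$, then $\sum_{i=1}^n\mathfrak M_i=0$, where $\mathfrak M_i=1/\det[\mathrm{Jac}\,\mathbf f_c](\mathbf x_i)$.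
   Context: These maps are the universal local forms of generic maps between planes (induced by Lagrangian generating families) near caustics of codimension at most 3. $\mathfrak M_i$ is the signed magnification of the lensed image $\mathbf x_i$; equivalently, $\mathfrak M_i$ is the reciprocal of the Gaussian curvature of the graph of the generating function at the corresponding critical point. The set of $\mathbf s$ with exactly $n$ nondegenerate preimages is the $n$-image region. *)

(* Defs.v *)
From Stdlib Require Import Reals Lra List.
Open Scope R_scope.

Definition R2 := (R * R)%type.

Definition fold_map (x : R2) : R2 := (fst x, (snd x) ^ 2).
Definition cusp_map (x : R2) : R2 :=
  (fst x, fst x * snd x + (snd x) ^ 3).
Definition swallowtail_map (c : R) (x : R2) : R2 :=
  (fst x * snd x + c * (fst x) ^ 2 + (fst x) ^ 4, snd x).
Definition elliptic_umbilic_map (c : R) (x : R2) : R2 :=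
  (3 * (snd x) ^ 2 - 3 * (fst x) ^ 2 - 2 * c * fst x,
   6 * fst x * snd x - 2 * c * snd x).
Definition hyperbolic_umbilic_map (c : R) (x : R2) : R2 :=
  (- 3 * (fst x) ^ 2 - c * snd x, - 3 * (snd x) ^ 2 - c * fst x).

Definition is_jac_det (f : R2 -> R2) (x : R2) (d : R) : Prop :=
  exists a11 a12 a21 a22 : R,
    derivable_pt_lim (fun t => fst (f (t, snd x))) (fst x) a11 /\
    derivable_pt_lim (fun t => fst (f (fst x, t))) (snd x) a12 /\
    derivable_pt_lim (fun t => snd (f (t, snd x))) (fst x) a21 /\
    derivable_pt_lim (fun t => snd (f (fst x, t))) (snd x) a22 /\
    d = a11 * a22 - a12 * a21.

Definition magnification_sum_zero (f : R2 -> R2) (n : nat) : Prop :=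
  forall (J : R2 -> R), (forall x, is_jac_det f x (J x)) ->
  forall (s : R2) (xs : list R2),
    length xs = n ->
    NoDup xs ->
    (forall x, f x = s <-> In x xs) ->
    (forall x, In x xs -> J x <> 0) ->
    fold_right Rplus 0 (map (fun x => / J x) xs) = 0.

(* Main.v *)
Require Import Defs.
From Stdlib Require Import Reals Lra List.
Open Scope R_scope.

Lemma D_plus f g x a b : derivable_pt_lim f x a -> derivable_pt_lim g x b ->
  derivable_pt_lim (fun t => f t + g t) x (a + b).
Proof. intros; apply (derivable_pt_lim_plus f g); auto. Qed.
Lemma D_minus f g x a b : derivable_pt_lim f x a -> derivable_pt_lim g x b ->
  derivable_pt_lim (fun t => f t - g t) x (a - b).
Proof. intros; apply (derivable_pt_lim_minus f g); auto. Qed.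
Lemma D_mult f g x a b : derivable_pt_lim f x a -> derivable_pt_lim g x b ->
  derivable_pt_lim (fun t => f t * g t) x (a * g x + f x * b).
Proof. intros; apply (derivable_pt_lim_mult f g); auto. Qed.
Lemma D_opp f x a : derivable_pt_lim f x a ->
  derivable_pt_lim (fun t => - f t) x (- a).
Proof. intros; apply (derivable_pt_lim_opp f); auto. Qed.
Lemma D_const (c x : R) : derivable_pt_lim (fun _ => c) x 0.
Proof. apply (derivable_pt_lim_const c). Qed.
Lemma D_eq f x l l' : derivable_pt_lim f x l -> l = l' -> derivable_pt_lim f x l'.
Proof. intros H ->; exact H. Qed.
Lemma U f x l1 l : derivable_pt_lim f x l1 -> derivable_pt_lim f x l -> l1 = l.
Proof. apply uniqueness_limite. Qed.

Ltac dtac := match goal with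
 | |- derivable_pt_lim (fun _ => ?c) _ _ => apply D_const
 | |- derivable_pt_lim (fun t => t) _ _ => apply derivable_pt_lim_id
 | |- derivable_pt_lim (fun t => t ^ ?n) _ _ => apply derivable_pt_lim_pow
 | |- derivable_pt_lim (fun t => @?f t + @?g t) _ _ => apply (D_plus f g)
 | |- derivable_pt_lim (fun t => @?f t - @?g t) _ _ => apply (D_minus f g)
 | |- derivable_pt_lim (fun t => @?f t * @?g t) _ _ => apply (D_mult f g)
 | |- derivable_pt_lim (fun t => - @?f t) _ _ => apply (D_opp f)
 end.

Ltac dsolve := eapply D_eq; [ repeat dtac | simpl; ring ].

Ltac jac_tac H1 H2 H3 H4 v11 v12 v21 v22 :=
  cbn [fst snd] in *;
  rewrite (U _ _ _ v11 H1) by dsolve; rewrite (U _ _ _ v12 H2) by dsolve;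
  rewrite (U _ _ _ v21 H3) by dsolve; rewrite (U _ _ _ v22 H4) by dsolve;
  ring.

Definition Jfo (p : R2) := 2 * snd p.
Definition Jcu (p : R2) := fst p + 3 * snd p ^ 2.
Definition Jsw c (p : R2) := snd p + 2 * c * fst p + 4 * fst p ^ 3.
Definition Jel c (p : R2) := 4 * c ^ 2 - 36 * fst p ^ 2 - 36 * snd p ^ 2.
Definition Jhy c (p : R2) := 36 * fst p * snd p - c ^ 2.

Lemma jac_fo p : forall dd, is_jac_det fold_map p dd -> dd = Jfo p.
Proof. unfold fold_map, Jfo; destruct p as [x1 x2]; intros dd (a11&a12&a21&a22&H1&H2&H3&H4&->); jac_tac H1 H2 H3 H4 1 0 0 (2 * x2). Qed.
Lemma jac_cu p : forall dd, is_jac_det cusp_map p dd -> dd = Jcu p.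
Proof. unfold cusp_map, Jcu; destruct p as [x1 x2]; intros dd (a11&a12&a21&a22&H1&H2&H3&H4&->); jac_tac H1 H2 H3 H4 1 0 x2 (x1 + 3 * x2^2). Qed.
Lemma jac_sw c p : forall dd, is_jac_det (swallowtail_map c) p dd -> dd = Jsw c p.
Proof. unfold swallowtail_map, Jsw; destruct p as [x1 x2]; intros dd (a11&a12&a21&a22&H1&H2&H3&H4&->); jac_tac H1 H2 H3 H4 (x2 + 2*c*x1 + 4*x1^3) x1 0 1. Qed.
Lemma jac_el c p : forall dd, is_jac_det (elliptic_umbilic_map c) p dd -> dd = Jel c p.
Proof. unfold elliptic_umbilic_map, Jel; destruct p as [x1 x2]; intros dd (a11&a12&a21&a22&H1&H2&H3&H4&->); jac_tac H1 H2 H3 H4 (-6*x1-2*c) (6*x2) (6*x2) (6*x1-2*c). Qed.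
Lemma jac_hy c p : forall dd, is_jac_det (hyperbolic_umbilic_map c) p dd -> dd = Jhy c p.
Proof. unfold hyperbolic_umbilic_map, Jhy; destruct p as [x1 x2]; intros dd (a11&a12&a21&a22&H1&H2&H3&H4&->); jac_tac H1 H2 H3 H4 (-6*x1) (-c) (-c) (-6*x2). Qed.

Lemma canc a b : a <> 0 -> a * b = 0 -> b = 0.
Proof. intros Ha H. destruct (Rmult_integral _ _ H); [contradiction|auto]. Qed.

Lemma dz a b : a <> b -> a - b <> 0.
Proof. intros H H'; apply H; lra. Qed.

Lemma quad_zero e2 e1 e0 r1 r2 r3 :
  r1 <> r2 -> r1 <> r3 -> r2 <> r3 ->
  e2*r1^2+e1*r1+e0 = 0 -> e2*r2^2+e1*r2+e0 = 0 -> e2*r3^2+e1*r3+e0 = 0 ->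
  e2 = 0 /\ e1 = 0 /\ e0 = 0.
Proof.
  intros d12 d13 d23 h1 h2 h3.
  assert (D12 : e2*(r1+r2)+e1 = 0).
  { apply (canc (r1-r2)); [apply dz; auto|]. transitivity ((e2*r1^2+e1*r1+e0)-(e2*r2^2+e1*r2+e0)); [ring|lra]. }
  assert (D13 : e2*(r1+r3)+e1 = 0).
  { apply (canc (r1-r3)); [apply dz; auto|]. transitivity ((e2*r1^2+e1*r1+e0)-(e2*r3^2+e1*r3+e0)); [ring|lra]. }
  assert (E2 : e2 = 0).
  { apply (canc (r2-r3)); [apply dz; auto|]. transitivity ((e2*(r1+r2)+e1)-(e2*(r1+r3)+e1)); [ring|lra]. }
  subst e2. split; [auto|]. assert (e1 = 0) by lra. subst. split; [auto|]. lra.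
Qed.

Lemma cubic_zero e3 e2 e1 e0 r1 r2 r3 r4 :
  r1 <> r2 -> r1 <> r3 -> r1 <> r4 -> r2 <> r3 -> r2 <> r4 -> r3 <> r4 ->
  e3*r1^3+e2*r1^2+e1*r1+e0 = 0 -> e3*r2^3+e2*r2^2+e1*r2+e0 = 0 ->
  e3*r3^3+e2*r3^2+e1*r3+e0 = 0 -> e3*r4^3+e2*r4^2+e1*r4+e0 = 0 ->
  e3 = 0 /\ e2 = 0 /\ e1 = 0 /\ e0 = 0.
Proof.
  intros d12 d13 d14 d23 d24 d34 h1 h2 h3 h4.
  assert (D12 : e3*(r1^2+r1*r2+r2^2)+e2*(r1+r2)+e1 = 0).
  { apply (canc (r1-r2)); [apply dz; auto|]. transitivity ((e3*r1^3+e2*r1^2+e1*r1+e0)-(e3*r2^3+e2*r2^2+e1*r2+e0)); [ring|lra]. }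
  assert (D13 : e3*(r1^2+r1*r3+r3^2)+e2*(r1+r3)+e1 = 0).
  { apply (canc (r1-r3)); [apply dz; auto|]. transitivity ((e3*r1^3+e2*r1^2+e1*r1+e0)-(e3*r3^3+e2*r3^2+e1*r3+e0)); [ring|lra]. }
  assert (D14 : e3*(r1^2+r1*r4+r4^2)+e2*(r1+r4)+e1 = 0).
  { apply (canc (r1-r4)); [apply dz; auto|]. transitivity ((e3*r1^3+e2*r1^2+e1*r1+e0)-(e3*r4^3+e2*r4^2+e1*r4+e0)); [ring|lra]. }
  assert (E123 : e3*(r1+r2+r3)+e2 = 0).
  { apply (canc (r2-r3)); [apply dz; auto|]. transitivity ((e3*(r1^2+r1*r2+r2^2)+e2*(r1+r2)+e1)-(e3*(r1^2+r1*r3+r3^2)+e2*(r1+r3)+e1)); [ring|lra]. }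
  assert (E124 : e3*(r1+r2+r4)+e2 = 0).
  { apply (canc (r2-r4)); [apply dz; auto|]. transitivity ((e3*(r1^2+r1*r2+r2^2)+e2*(r1+r2)+e1)-(e3*(r1^2+r1*r4+r4^2)+e2*(r1+r4)+e1)); [ring|lra]. }
  assert (E3 : e3 = 0).
  { apply (canc (r3-r4)); [apply dz; auto|]. transitivity ((e3*(r1+r2+r3)+e2)-(e3*(r1+r2+r4)+e2)); [ring|lra]. }
  subst e3. assert (e2 = 0) by lra. subst e2. assert (e1 = 0) by lra. subst e1. lra.
Qed.

Ltac nz := repeat (apply Rmult_integral_contrapositive_currified); try apply dz; auto.

Lemma cubic_sum k a b d r1 r2 r3 :
  k <> 0 -> r1 <> r2 -> r1 <> r3 -> r2 <> r3 ->
  k*r1^3+a*r1^2+b*r1+d = 0 -> k*r2^3+a*r2^2+b*r2+d = 0 -> k*r3^3+a*r3^2+b*r3+d = 0 ->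
  / (3*k*r1^2+2*a*r1+b) + (/ (3*k*r2^2+2*a*r2+b) + (/ (3*k*r3^2+2*a*r3+b) + 0)) = 0.
Proof.
  intros hk d12 d13 d23 h1 h2 h3.
  destruct (quad_zero (a + k*(r1+r2+r3)) (b - k*(r1*r2+r1*r3+r2*r3)) (d + k*(r1*r2*r3))
     r1 r2 r3 d12 d13 d23) as (E2 & E1 & E0).
  1: (transitivity (k*r1^3+a*r1^2+b*r1+d); [ring|exact h1]).
  1: (transitivity (k*r2^3+a*r2^2+b*r2+d); [ring|exact h2]).
  1: (transitivity (k*r3^3+a*r3^2+b*r3+d); [ring|exact h3]).
  assert (Ha : a = -(k*(r1+r2+r3))) by lra. assert (Hb : b = k*(r1*r2+r1*r3+r2*r3)) by lra.
  subst a b.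
  replace (3*k*r1^2+2*_*r1+_) with (k*(r1-r2)*(r1-r3)) by ring.
  replace (3*k*r2^2+2*_*r2+_) with (k*(r2-r1)*(r2-r3)) by ring.
  replace (3*k*r3^2+2*_*r3+_) with (k*(r3-r1)*(r3-r2)) by ring.
  field. repeat split; nz.
Qed.

Lemma quartic_sum k a b c d al be r1 r2 r3 r4 :
  k <> 0 -> r1 <> r2 -> r1 <> r3 -> r1 <> r4 -> r2 <> r3 -> r2 <> r4 -> r3 <> r4 ->
  k*r1^4+a*r1^3+b*r1^2+c*r1+d = 0 -> k*r2^4+a*r2^3+b*r2^2+c*r2+d = 0 ->
  k*r3^4+a*r3^3+b*r3^2+c*r3+d = 0 -> k*r4^4+a*r4^3+b*r4^2+c*r4+d = 0 ->
  (al*r1+be) / (4*k*r1^3+3*a*r1^2+2*b*r1+c) + ((al*r2+be) / (4*k*r2^3+3*a*r2^2+2*b*r2+c)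
   + ((al*r3+be) / (4*k*r3^3+3*a*r3^2+2*b*r3+c) + ((al*r4+be) / (4*k*r4^3+3*a*r4^2+2*b*r4+c) + 0))) = 0.
Proof.
  intros hk d12 d13 d14 d23 d24 d34 h1 h2 h3 h4.
  destruct (cubic_zero (a + k*(r1+r2+r3+r4))
    (b - k*(r1*r2+r1*r3+r1*r4+r2*r3+r2*r4+r3*r4))
    (c + k*(r1*r2*r3+r1*r2*r4+r1*r3*r4+r2*r3*r4)) (d - k*(r1*r2*r3*r4))
     r1 r2 r3 r4 d12 d13 d14 d23 d24 d34) as (E3 & E2 & E1 & E0).
  1: (transitivity (k*r1^4+a*r1^3+b*r1^2+c*r1+d); [ring|exact h1]).
  1: (transitivity (k*r2^4+a*r2^3+b*r2^2+c*r2+d); [ring|exact h2]).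
  1: (transitivity (k*r3^4+a*r3^3+b*r3^2+c*r3+d); [ring|exact h3]).
  1: (transitivity (k*r4^4+a*r4^3+b*r4^2+c*r4+d); [ring|exact h4]).
  assert (Ha : a = -(k*(r1+r2+r3+r4))) by lra.
  assert (Hb : b = k*(r1*r2+r1*r3+r1*r4+r2*r3+r2*r4+r3*r4)) by lra.
  assert (Hc : c = -(k*(r1*r2*r3+r1*r2*r4+r1*r3*r4+r2*r3*r4))) by lra.
  subst a b c.
  replace (4*k*r1^3+_*r1^2+_*r1+_) with (k*(r1-r2)*(r1-r3)*(r1-r4)) by ring.
  replace (4*k*r2^3+_*r2^2+_*r2+_) with (k*(r2-r1)*(r2-r3)*(r2-r4)) by ring.
  replace (4*k*r3^3+_*r3^2+_*r3+_) with (k*(r3-r1)*(r3-r2)*(r3-r4)) by ring.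
  replace (4*k*r4^3+_*r4^2+_*r4+_) with (k*(r4-r1)*(r4-r2)*(r4-r3)) by ring.
  field. repeat split; nz.
Qed.
Lemma nodup_ne {A} (x y : A) l : NoDup l -> In x l -> In y l -> x <> y -> True. Proof. auto. Qed.

Ltac nodup_split H :=
  repeat match goal with
  | H : NoDup (_ :: _) |- _ => let Hn := fresh "Hn" in inversion H as [|? ? Hn H']; subst; clear H
  end.

Lemma list2 (P : R2 -> Prop) (g : R2 -> R) xs : length xs = 2%nat -> NoDup xs ->
  (forall x, In x xs -> P x) ->
  (forall p1 p2, p1 <> p2 -> P p1 -> P p2 -> g p1 + (g p2 + 0) = 0) ->
  fold_right Rplus 0 (map g xs) = 0.
Proof.
  intros Hl Hnd HP K. destruct xs as [|p1 [|p2 [|? ?]]]; try discriminate.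
  inversion Hnd; subst. simpl. apply K; [| apply HP; simpl; auto ..].
  intro e; subst; simpl in *; tauto.
Qed.

Lemma list3 (P : R2 -> Prop) (g : R2 -> R) xs : length xs = 3%nat -> NoDup xs ->
  (forall x, In x xs -> P x) ->
  (forall p1 p2 p3, p1 <> p2 -> p1 <> p3 -> p2 <> p3 -> P p1 -> P p2 -> P p3 ->
     g p1 + (g p2 + (g p3 + 0)) = 0) ->
  fold_right Rplus 0 (map g xs) = 0.
Proof.
  intros Hl Hnd HP K. destruct xs as [|p1 [|p2 [|p3 [|? ?]]]]; try discriminate.
  inversion Hnd as [|? ? N1 Hnd2]; subst. inversion Hnd2 as [|? ? N2 Hnd3]; subst.
  simpl. apply K; [| | | apply HP; simpl; auto ..];
  intro e; subst; simpl in *; tauto.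
Qed.

Lemma list4 (P : R2 -> Prop) (g : R2 -> R) xs : length xs = 4%nat -> NoDup xs ->
  (forall x, In x xs -> P x) ->
  (forall p1 p2 p3 p4, p1 <> p2 -> p1 <> p3 -> p1 <> p4 -> p2 <> p3 -> p2 <> p4 -> p3 <> p4 ->
     P p1 -> P p2 -> P p3 -> P p4 ->
     g p1 + (g p2 + (g p3 + (g p4 + 0))) = 0) ->
  fold_right Rplus 0 (map g xs) = 0.
Proof.
  intros Hl Hnd HP K. destruct xs as [|p1 [|p2 [|p3 [|p4 [|? ?]]]]]; try discriminate.
  inversion Hnd as [|? ? N1 Hnd2]; subst. inversion Hnd2 as [|? ? N2 Hnd3]; subst.
  inversion Hnd3 as [|? ? N3 Hnd4]; subst.
  simpl. apply K; [| | | | | | apply HP; simpl; auto ..];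
  intro e; subst; simpl in *; tauto.
Qed.

Definition PP (f : R2 -> R2) (Jf : R2 -> R) (s : R2) (J : R2 -> R) (p : R2) :=
  f p = s /\ J p = Jf p /\ J p <> 0.

Lemma setup (f : R2 -> R2) (Jf : R2 -> R) n :
  (forall p d, is_jac_det f p d -> d = Jf p) ->
  (forall J s xs, length xs = n -> NoDup xs -> (forall x, In x xs -> PP f Jf s J x) ->
     fold_right Rplus 0 (map (fun x => / J x) xs) = 0) ->
  magnification_sum_zero f n.
Proof.
  intros Hj K J HJ s xs Hl Hnd Hiff HJ0. apply (K J s xs Hl Hnd).
  intros x Hx. split; [apply Hiff; auto | split; [apply Hj, HJ | auto]].
Qed.

Ltac getpt H := let E := fresh "E" in let Jq := fresh "Jq" in let N := fresh "N" in
  destruct H as (E & Jq & N); rewrite Jq in N |- *; clear Jq.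

Lemma fold_ok : magnification_sum_zero fold_map 2.
Proof.
  apply (setup _ Jfo); [exact jac_fo|]. intros J [s1 s2] xs Hl Hnd HP.
  apply (list2 _ _ xs Hl Hnd HP). intros [a1 b1] [a2 b2] d12 P1 P2.
  getpt P1. getpt P2. unfold fold_map, Jfo in *; cbn [fst snd] in *.
  injection E; injection E0; intros. subst.
  assert (b1 + b2 = 0).
  { apply (canc (b1 - b2)). intro h. apply d12. f_equal. lra. lra. }
  replace b2 with (-b1) by lra. field. intro h; apply N; lra.
Qed.

Ltac pe E := let A := fresh "Ea" in let B := fresh "Eb" in
  apply pair_equal_spec in E; destruct E as [A B].

Lemma cusp_ok : magnification_sum_zero cusp_map 3.
Proof.
  apply (setup _ Jcu); [exact jac_cu|]. intros J [s1 s2] xs Hl Hnd HP.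
  apply (list3 _ _ xs Hl Hnd HP). intros [a1 b1] [a2 b2] [a3 b3] d12 d13 d23 P1 P2 P3.
  getpt P1. getpt P2. getpt P3. unfold cusp_map, Jcu in *; cbn [fst snd] in *.
  pe E; pe E0; pe E1. subst a1 a2 a3.
  assert (ne : forall u v : R, (s1, u) <> (s1, v) -> u <> v) by (intros u v h e; apply h; subst; auto).
  pose proof (cubic_sum 1 0 s1 (-s2) b1 b2 b3 ltac:(lra) (ne _ _ d12) (ne _ _ d13) (ne _ _ d23)
     ltac:(lra) ltac:(lra) ltac:(lra)) as K.
  assert (R : forall t, 3*1*t^2+2*0*t+s1 = s1+3*t^2) by (intro; ring).
  rewrite !R in K. exact K.
Qed.

Lemma swallow_ok c : magnification_sum_zero (swallowtail_map c) 4.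
Proof.
  apply (setup _ (Jsw c)); [exact (jac_sw c)|]. intros J [s1 s2] xs Hl Hnd HP.
  apply (list4 _ _ xs Hl Hnd HP). intros [a1 b1] [a2 b2] [a3 b3] [a4 b4] d12 d13 d14 d23 d24 d34 P1 P2 P3 P4.
  getpt P1. getpt P2. getpt P3. getpt P4. unfold swallowtail_map, Jsw in *; cbn [fst snd] in *.
  pe E; pe E0; pe E1; pe E2. subst b1 b2 b3 b4.
  assert (ne : forall u v : R, (u, s2) <> (v, s2) -> u <> v) by (intros u v h e; apply h; subst; auto).
  pose proof (quartic_sum 1 0 c s2 (-s1) 0 1 a1 a2 a3 a4 ltac:(lra) (ne _ _ d12) (ne _ _ d13) (ne _ _ d14)
     (ne _ _ d23) (ne _ _ d24) (ne _ _ d34)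
     ltac:(lra) ltac:(lra) ltac:(lra) ltac:(lra)) as K.
  assert (R : forall t, (0*t+1)/(4*1*t^3+3*0*t^2+2*c*t+s2) = / (s2 + 2*c*t + 4*t^3)).
  { intro t. unfold Rdiv. rewrite Rmult_0_l, Rplus_0_l, Rmult_1_l. f_equal. ring. }
  rewrite !R in K. exact K.
Qed.

Lemma sqcase x u : x^2 = u^2 -> x = u \/ x = -u.
Proof.
  intro h. assert (h' : (x - u) * (x + u) = 0) by lra.
  destruct (Rmult_integral _ _ h'); [left|right]; lra.
Qed.

Lemma hy_pt x y c s1 s2 : - 3 * x ^ 2 - c * y = s1 -> - 3 * y ^ 2 - c * x = s2 ->
  27*x^4+0*x^3+(18*s1)*x^2+c^3*x+(3*s1^2+c^2*s2) = 0 /\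
  c * (36 * x * y - c ^ 2) + (4*27*x^3+3*0*x^2+2*(18*s1)*x+c^3) = 0.
Proof. intros <- <-. split; ring. Qed.

Lemma conv_hy c Jv Q x : c <> 0 -> Jv <> 0 -> c * Jv + Q = 0 -> (0*x + -c)/Q = / Jv.
Proof. intros hc hj h. replace Q with (-(c*Jv)) by lra. field. auto. Qed.

Lemma hy0 u v : u <> 0 -> v <> 0 ->
  / (36 * u * v - 0 ^ 2) + / (36 * - u * v - 0 ^ 2) + / (36 * u * - v - 0 ^ 2)
  + / (36 * - u * - v - 0 ^ 2) = 0.
Proof. intros. field. auto. Qed.

Lemma hyper_ok c : magnification_sum_zero (hyperbolic_umbilic_map c) 4.
Proof.
  apply (setup _ (Jhy c)); [exact (jac_hy c)|]. intros J [s1 s2] xs Hl Hnd HP.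
  apply (list4 _ _ xs Hl Hnd HP). intros [a1 b1] [a2 b2] [a3 b3] [a4 b4] d12 d13 d14 d23 d24 d34 P1 P2 P3 P4.
  getpt P1. getpt P2. getpt P3. getpt P4. unfold hyperbolic_umbilic_map, Jhy in *; cbn [fst snd] in *.
  pe E; pe E0; pe E1; pe E2.
  destruct (Req_dec c 0) as [c0|hc].
  - subst c.
    assert (nx : a1 <> 0) by (intro h; apply N; subst; ring).
    assert (ny : b1 <> 0) by (intro h; apply N; subst; ring).
    assert (X2 : a2 = a1 \/ a2 = -a1) by (apply sqcase; lra).
    assert (X3 : a3 = a1 \/ a3 = -a1) by (apply sqcase; lra).
    assert (X4 : a4 = a1 \/ a4 = -a1) by (apply sqcase; lra).
    assert (Y2 : b2 = b1 \/ b2 = -b1) by (apply sqcase; lra).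
    assert (Y3 : b3 = b1 \/ b3 = -b1) by (apply sqcase; lra).
    assert (Y4 : b4 = b1 \/ b4 = -b1) by (apply sqcase; lra).
    pose proof (hy0 a1 b1 nx ny) as K.
    clear -X2 X3 X4 Y2 Y3 Y4 K d12 d13 d14 d23 d24 d34.
    destruct X2, X3, X4, Y2, Y3, Y4; subst; first [congruence | lra].
  - destruct (hy_pt _ _ _ _ _ Ea Eb) as [Q1 D1].
    destruct (hy_pt _ _ _ _ _ Ea0 Eb0) as [Q2 D2].
    destruct (hy_pt _ _ _ _ _ Ea1 Eb1) as [Q3 D3].
    destruct (hy_pt _ _ _ _ _ Ea2 Eb2) as [Q4 D4].
    assert (ne : forall x y x' y', - 3 * x ^ 2 - c * y = s1 -> - 3 * x' ^ 2 - c * y' = s1 ->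
       (x, y) <> (x', y') -> x <> x').
    { intros x y x' y' h1 h2 h e. apply h. subst x'. f_equal.
      apply (Rmult_eq_reg_l c); [lra | auto]. }
    pose proof (quartic_sum 27 0 (18*s1) (c^3) (3*s1^2+c^2*s2) 0 (-c) a1 a2 a3 a4 ltac:(lra)
      (ne _ _ _ _ Ea Ea0 d12) (ne _ _ _ _ Ea Ea1 d13) (ne _ _ _ _ Ea Ea2 d14)
      (ne _ _ _ _ Ea0 Ea1 d23) (ne _ _ _ _ Ea0 Ea2 d24) (ne _ _ _ _ Ea1 Ea2 d34)
      Q1 Q2 Q3 Q4) as K.
    rewrite (conv_hy _ _ _ _ hc N D1), (conv_hy _ _ _ _ hc N0 D2),
      (conv_hy _ _ _ _ hc N1 D3), (conv_hy _ _ _ _ hc N2 D4) in K.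
    exact K.
Qed.

Lemma el_pt x y c s1 s2 : 3 * y ^ 2 - 3 * x ^ 2 - 2 * c * x = s1 -> 6 * x * y - 2 * c * y = s2 ->
  108*x^4+0*x^3+(36*s1-36*c^2)*x^2+(8*c^3-24*c*s1)*x+(4*c^2*s1-3*s2^2) = 0 /\
  (4*108*x^3+3*0*x^2+2*(36*s1-36*c^2)*x+(8*c^3-24*c*s1)) + 2*(3*x-c)*(4 * c ^ 2 - 36 * x ^ 2 - 36 * y ^ 2) = 0.
Proof. intros <- <-. split; ring. Qed.

Lemma conv_el c Jv Q x : 3*x - c <> 0 -> Jv <> 0 -> Q + 2*(3*x-c)*Jv = 0 -> (-6*x + 2*c)/Q = / Jv.
Proof. intros hc hj h. replace Q with (-(2*(3*x-c)*Jv)) by lra. field. auto. Qed.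

Definition Ael c s1 (p : R2) := snd p = 0 /\ 3 * fst p ^ 2 + 2 * c * fst p + s1 = 0.
Definition Bel c s1 (p : R2) := fst p = c / 3 /\ 3 * snd p ^ 2 - 3 * (c/3) ^ 2 - 2 * c * (c/3) = s1.

Lemma el_AB x y c s1 : 3 * y ^ 2 - 3 * x ^ 2 - 2 * c * x = s1 -> 6 * x * y - 2 * c * y = 0 ->
  Ael c s1 (x, y) \/ Bel c s1 (x, y).
Proof.
  intros h1 h2. assert (h : y * (6*x - 2*c) = 0) by lra.
  destruct (Rmult_integral _ _ h) as [hy|hx].
  - left. subst y. unfold Ael; cbn [fst snd]. split; [auto|]. rewrite <- h1. ring.
  - right. assert (ex : x = c/3) by lra. subst x. unfold Bel; cbn [fst snd]. split; auto.
Qed.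

Lemma A3 c s1 p q r : Ael c s1 p -> Ael c s1 q -> Ael c s1 r -> p <> q -> p <> r -> q <> r -> False.
Proof.
  destruct p as [x1 y1], q as [x2 y2], r as [x3 y3]; unfold Ael; cbn [fst snd].
  intros [-> h1] [-> h2] [-> h3] d12 d13 d23.
  destruct (quad_zero 3 (2*c) s1 x1 x2 x3) as [h _];
    [ intro e; subst; auto .. | lra | lra | lra | lra ].
Qed.

Lemma B3 c s1 p q r : Bel c s1 p -> Bel c s1 q -> Bel c s1 r -> p <> q -> p <> r -> q <> r -> False.
Proof.
  destruct p as [x1 y1], q as [x2 y2], r as [x3 y3]; unfold Bel; cbn [fst snd].
  intros [-> h1] [-> h2] [-> h3] d12 d13 d23.
  destruct (quad_zero 3 0 (- 3 * (c/3) ^ 2 - 2 * c * (c/3) - s1) y1 y2 y3) as [h _];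
    [ intro e; subst; auto .. | lra | lra | lra | lra ].
Qed.

Lemma AB22 c s1 p q r t : Ael c s1 p -> Ael c s1 q -> Bel c s1 r -> Bel c s1 t -> p <> q -> r <> t ->
  Jel c p <> 0 -> Jel c q <> 0 -> Jel c r <> 0 -> Jel c t <> 0 ->
  / Jel c p + / Jel c q + / Jel c r + / Jel c t = 0.
Proof.
  destruct p as [a1 y1], q as [a2 y2], r as [x3 b1], t as [x4 b2]; unfold Ael, Bel, Jel; cbn [fst snd].
  intros [-> h1] [-> h2] [-> h3] [-> h4] d12 d34 N1 N2 N3 N4.
  assert (S : 3*(a1+a2)+2*c = 0).
  { apply (canc (a1-a2)). apply dz; intro e; subst; auto. lra. }
  assert (S2 : b1 + b2 = 0).
  { apply (canc (b1-b2)). apply dz; intro e; subst; auto. lra. }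
  assert (ea2 : a2 = -2*c/3 - a1) by lra. subst a2.
  assert (eb2 : b2 = -b1) by lra. subst b2.
  assert (E3 : 4 * c ^ 2 - 36 * (c / 3) ^ 2 - 36 * b1 ^ 2 = -12*((c-3*a1)*(c+a1))) by lra.
  assert (E4 : 4 * c ^ 2 - 36 * (c / 3) ^ 2 - 36 * (-b1) ^ 2 = -12*((c-3*a1)*(c+a1))) by lra.
  rewrite E3, E4 in *.
  replace (4 * c ^ 2 - 36 * a1 ^ 2 - 36 * 0 ^ 2) with (4*(c-3*a1)*(c+3*a1)) in * by ring.
  replace (4 * c ^ 2 - 36 * (-2*c/3 - a1) ^ 2 - 36 * 0 ^ 2) with (-12*(c+a1)*(c+3*a1)) in * by field.
  assert (n1 : c - 3*a1 <> 0) by (intro e; apply N1; rewrite e; ring).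
  assert (n2 : c + 3*a1 <> 0) by (intro e; apply N1; rewrite e; ring).
  assert (n3 : c + a1 <> 0) by (intro e; apply N2; rewrite e; ring).
  field. auto.
Qed.

Lemma ellip_ok c : magnification_sum_zero (elliptic_umbilic_map c) 4.
Proof.
  apply (setup _ (Jel c)); [exact (jac_el c)|]. intros J [s1 s2] xs Hl Hnd HP.
  apply (list4 _ _ xs Hl Hnd HP). intros p1 p2 p3 p4 d12 d13 d14 d23 d24 d34 P1 P2 P3 P4.
  getpt P1. getpt P2. getpt P3. getpt P4.
  destruct (Req_dec s2 0) as [s0|hs].
  - subst s2.
    assert (G : forall p, elliptic_umbilic_map c p = (s1, 0) -> Ael c s1 p \/ Bel c s1 p).
    { intros [x y] h. unfold elliptic_umbilic_map in h; cbn [fst snd] in h. pe h.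
      apply el_AB; auto. }
    destruct (G _ E), (G _ E0), (G _ E1), (G _ E2); clear G E E0 E1 E2;
    match goal with
    | h1 : Ael _ _ ?p, h2 : Ael _ _ ?q, h3 : Ael _ _ ?r |- _ =>
        exfalso; apply (A3 c s1 p q r h1 h2 h3); assumption
    | h1 : Bel _ _ ?p, h2 : Bel _ _ ?q, h3 : Bel _ _ ?r |- _ =>
        exfalso; apply (B3 c s1 p q r h1 h2 h3); assumption
    | h1 : Ael _ _ ?p, h2 : Ael _ _ ?q, h3 : Bel _ _ ?r, h4 : Bel _ _ ?t |- _ =>
        let K := fresh "K" in
        assert (K : / Jel c p + / Jel c q + / Jel c r + / Jel c t = 0)
          by (apply (AB22 c s1 p q r t h1 h2 h3 h4); first [assumption | apply not_eq_sym; assumption]);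
        lra
    end.
  - destruct p1 as [a1 b1], p2 as [a2 b2], p3 as [a3 b3], p4 as [a4 b4].
    unfold elliptic_umbilic_map, Jel in *; cbn [fst snd] in *.
    pe E; pe E0; pe E1; pe E2.
    destruct (el_pt _ _ _ _ _ Ea Eb) as [Q1 D1].
    destruct (el_pt _ _ _ _ _ Ea0 Eb0) as [Q2 D2].
    destruct (el_pt _ _ _ _ _ Ea1 Eb1) as [Q3 D3].
    destruct (el_pt _ _ _ _ _ Ea2 Eb2) as [Q4 D4].
    assert (nz : forall x y, 6 * x * y - 2 * c * y = s2 -> 3*x - c <> 0).
    { intros x y h e. apply hs. rewrite <- h. replace (6*x*y - 2*c*y) with (2*y*(3*x-c)) by ring.
      rewrite e; ring. }
    assert (ne : forall x y x' y', 6 * x * y - 2 * c * y = s2 -> 6 * x' * y' - 2 * c * y' = s2 ->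
       (x, y) <> (x', y') -> x <> x').
    { intros x y x' y' h1 h2 h e. apply h. subst x'. f_equal.
      apply (Rmult_eq_reg_l (2*(3*x-c))); [ | apply Rmult_integral_contrapositive_currified;
        [lra | exact (nz _ _ h1)]].
      replace (2*(3*x-c)*y) with (6 * x * y - 2 * c * y) by ring.
      replace (2*(3*x-c)*y') with (6 * x * y' - 2 * c * y') by ring. lra. }
    pose proof (quartic_sum 108 0 (36*s1-36*c^2) (8*c^3-24*c*s1) (4*c^2*s1-3*s2^2) (-6) (2*c)
      a1 a2 a3 a4 ltac:(lra)
      (ne _ _ _ _ Eb Eb0 d12) (ne _ _ _ _ Eb Eb1 d13) (ne _ _ _ _ Eb Eb2 d14)
      (ne _ _ _ _ Eb0 Eb1 d23) (ne _ _ _ _ Eb0 Eb2 d24) (ne _ _ _ _ Eb1 Eb2 d34)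
      Q1 Q2 Q3 Q4) as K.
    rewrite (conv_el _ _ _ _ (nz _ _ Eb) N D1), (conv_el _ _ _ _ (nz _ _ Eb0) N0 D2),
      (conv_el _ _ _ _ (nz _ _ Eb1) N1 D3), (conv_el _ _ _ _ (nz _ _ Eb2) N2 D4) in K.
    exact K.
Qed.

Theorem theorem8p2 :
  magnification_sum_zero fold_map 2 /\
  magnification_sum_zero cusp_map 3 /\
  (forall c : R, magnification_sum_zero (swallowtail_map c) 4) /\
  (forall c : R, magnification_sum_zero (elliptic_umbilic_map c) 4) /\
  (forall c : R, magnification_sum_zero (hyperbolic_umbilic_map c) 4).
Proof.
  split; [exact fold_ok|]. split; [exact cusp_ok|]. split; [exact swallow_ok|].
  split; [exact ellip_ok | exact hyper_ok].
Qed.
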